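(* Let $m,k\ge 1$, let $a,b>0$ and $z$ an integer with $0<z<k$, and let $p_*$ be the probability that a uniformly random $y\in\{0,1\}^k$ lies in the optimal region $\bar{X}_*=\{y\in\{0,1\}^k: f_{gen\_trap(k)}(y)>a\}$. Let $c>0$ be a constant ($c=\Omega(1)$). If a population of $\mu=\frac{c}{p_*}m$ bitstrings of length $mk$ is drawn independently and uniformly at random (each split into $m$ consecutive blocks of length $k$), then the probability that for every $i\in\{1,\dots,m\}$ at least one individual has its $i$-th block in $\bar{X}_*$ is at least $1-\epsilon$ with $\epsilon=me^{-cm}$, exponentially small in $m$.
   Context: Generalized trap function: for $y\in\{0,1\}^k$ with $u(y)$ ones, $f_{gen\_trap(k)}(y)=\frac{a}{z}(z-u(y))$ if $u(y)\le z$ and $f_{gen\_trap(k)}(y)=\frac{b}{k-z}(u(y)-z)$ otherwise. Equivalently $p_*=\Pr\big(\mathrm{Bin}(k,1/2)\ge \lceil a(k-z)/b\rceil+z\big)$. *)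

(* Defs.v *)
From HB Require Import structures.
From mathcomp Require Import all_boot all_order all_algebra.
From mathcomp Require Import reals.
From mathcomp.analysis Require Import sequences exp.
Set Implicit Arguments. Unset Strict Implicit. Unset Printing Implicit Defensive.
Import Order.TTheory GRing.Theory Num.Theory.
Local Open Scope ring_scope.

Definition ones (k : nat) (y : {ffun 'I_k -> bool}) : nat := #|[set j | y j]|.

Definition gen_trap (R : realType) (a b : R) (z k : nat)
    (y : {ffun 'I_k -> bool}) : R :=
  let u := ones y in
  if (u <= z)%N then a / z%:R * (z%:R - u%:R)
  else b / (k - z)%:R * (u%:R - z%:R).

Definition opt_region (R : realType) (a b : R) (z k : nat) :
    {set {ffun 'I_k -> bool}} :=
  [set y | a < gen_trap a b z y].

Definition p_star (R : realType) (a b : R) (z k : nat) : R :=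
  #|opt_region a b z k|%:R / #|{ffun 'I_k -> bool}|%:R.

Definition block (m k : nat) (x : (m * k).-tuple bool) (i : 'I_m) :
    {ffun 'I_k -> bool} :=
  [ffun j : 'I_k => nth false x (i * k + j)].

Definition population (mu m k : nat) := {ffun 'I_mu -> (m * k).-tuple bool}.

Definition all_blocks_covered (R : realType) (a b : R) (z mu m k : nat) :
    {set population mu m k} :=
  [set P : population mu m k |
     [forall i : 'I_m, [exists p : 'I_mu, block (P p) i \in opt_region a b z k]]].

(* probability under the uniform distribution on populations
   (= mu independent uniform bitstrings) *)
Definition unif_prob (R : realType) (T : finType) (E : {set T}) : R :=
  #|E|%:R / #|T|%:R.

(* Main.v *)
Require Import Defs.
From HB Require Import structures.
From mathcomp Require Import all_boot all_order all_algebra.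
From mathcomp Require Import reals.
From mathcomp.analysis Require Import sequences exp.
Import Order.TTheory GRing.Theory Num.Theory.
Set Implicit Arguments. Unset Strict Implicit. Unset Printing Implicit Defensive.

Lemma card_bigcup_le (T I : finType) (F : I -> {set T}) :
  (#|\bigcup_(i : I) F i| <= \sum_(i : I) #|F i|)%N.
Proof.
elim/big_rec2: _ => [|i U s _ H]; first by rewrite cards0.
apply: leq_trans (leq_card_setU _ _) _; exact: leq_add.
Qed.

Section Shift.
Variables (m k : nat) (i : 'I_m).
Let T := (m * k).-tuple bool.

Definition dn (d : {ffun 'I_k -> bool}) (n : nat) : bool :=
  [exists j : 'I_k, (val j == n) && d j].
Definition gsh d (n : nat) : bool := (i * k <= n)%N && dn d (n - i * k).
Definition shift d (x : T) : T := [tuple nth false x j (+) gsh d j | j < m * k].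

Lemma nth_shift d x n : (n < m * k)%N ->
  nth false (shift d x) n = nth false x n (+) gsh d n.
Proof. move=> H; have -> : n = Ordinal H by []. by rewrite nth_mktuple. Qed.

Lemma shiftK d : involutive (shift d).
Proof.
move=> x; apply: val_inj.
apply: (@eq_from_nth _ false); rewrite ?size_tuple // => n Hn.
by rewrite !nth_shift // addbK.
Qed.

Lemma blk_lt (j : 'I_k) : (i * k + j < m * k)%N.
Proof.
have Hi := ltn_ord i; have Hj := ltn_ord j.
apply: (@leq_trans (i.+1 * k)); first by rewrite mulSn addnC ltn_add2r.
by rewrite leq_mul2r Hi orbT.
Qed.

Lemma block_shift d x : block (shift d x) i = [ffun j => block x i j (+) d j].
Proof.
apply/ffunP => j; rewrite !ffunE nth_shift ?blk_lt //; congr (_ (+) _).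
rewrite /gsh leq_addr /= addKn /dn; apply/existsP/idP => [[j' /andP[/eqP e dj]]|dj].
  by have -> : j = j' by apply: val_inj.
by exists j; rewrite eqxx.
Qed.

Definition fiber (y : {ffun 'I_k -> bool}) := [set x : T | block x i == y].

Lemma fiber_le y y' : (#|fiber y| <= #|fiber y'|)%N.
Proof.
set d := [ffun j => y j (+) y' j].
rewrite -(card_imset _ (can_inj (shiftK d))); apply: subset_leq_card.
apply/subsetP => _ /imsetP[x + ->]; rewrite !inE => /eqP bx.
rewrite block_shift; apply/eqP/ffunP => j; by rewrite !ffunE -bx /d ffunE addKb.
Qed.

Lemma fiber_eq y y' : #|fiber y| = #|fiber y'|.
Proof. by apply/eqP; rewrite eqn_leq !fiber_le. Qed.

Lemma count_block (Y : {set {ffun 'I_k -> bool}}) :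
  (#|[set x : T | block x i \in Y]| * #|{ffun 'I_k -> bool}| = #|Y| * #|{: (m * k).-tuple bool}|)%N.
Proof.
pose y0 : {ffun 'I_k -> bool} := [ffun=> false].
have E (Z : {pred {ffun 'I_k -> bool}}) :
   #|[set x : T | block x i \in Z]| = (#|Z| * #|fiber y0|)%N.
  rewrite -sum1_card.
  have -> : #|Z| = (\sum_(y in Z) 1)%N by rewrite sum1_card.
  rewrite big_distrl /=.
  rewrite (partition_big (fun x => block x i) (mem Z)) /=; last by move=> x; rewrite inE.
  apply: eq_bigr => y Zy; rewrite mul1n -(fiber_eq y) -sum1_card.
  by apply: eq_bigl => x; rewrite !inE andb_idl // => /eqP ->.
rewrite E.
have := E (mem [set: {ffun 'I_k -> bool}]).
have -> : [set x : T | block x i \in [set: {ffun 'I_k -> bool}]] = setT.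
  by apply/setP => x; rewrite !inE.
rewrite cardsT => ->. 
have -> : #|mem [set: {ffun 'I_k -> bool}]| = #|{ffun 'I_k -> bool}| by rewrite cardsT.
by rewrite -mulnA [(#|fiber y0| * _)%N]mulnC.
Qed.
End Shift.
Unset Implicit Arguments.
Local Open Scope ring_scope.

Theorem lemma7p1 (R : realType) (m k : nat) (a b c : R) (z mu : nat) :
  (1 <= m)%N -> (1 <= k)%N -> 0 < a -> 0 < b -> (0 < z)%N -> (z < k)%N ->
  0 < c -> 0 < p_star a b z k ->
  mu%:R = c / p_star a b z k * m%:R ->
  1 - m%:R * expR (- (c * m%:R)) <=
    unif_prob R (all_blocks_covered a b z mu m k).
Proof.
move=> m1 k1 a0 b0 z0 zk c0 p0 hmu.
set X := opt_region a b z k.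
set p := p_star a b z k.
pose B (i : 'I_m) := [set x : (m * k).-tuple bool | block x i \in ~: X].
pose G (i : 'I_m) := [set P : population mu m k | [forall q, P q \in B i]].
set A := all_blocks_covered a b z mu m k.
have hG i : #|G i| = (#|B i| ^ mu)%N.
  rewrite -[mu in RHS]card_ord.
  rewrite -(@card_ffun_on _ _ (fun x => x \in B i)).
  apply: eq_card => P; rewrite inE.
  apply/idP/idP => [/forallP H|/ffun_onP H]; [apply/ffun_onP|apply/forallP] => q; have := H q; by rewrite ?inE.
have hU : (#|~: A| <= \sum_i #|G i|)%N.
  apply: leq_trans (card_bigcup_le G).
  apply: subset_leq_card; apply/subsetP => P; rewrite !inE => /forallPn [i /existsPn H].
  apply/bigcupP; exists i => //; rewrite inE; apply/forallP => q; rewrite inE in_setC.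
  exact: H.
have Fpos : (0 < #|{: {ffun 'I_k -> bool}}|)%N.
  by apply/card_gt0P; exists [ffun=> false].
have Tpos : (0 < #|{: (m * k).-tuple bool}|)%N.
  by apply/card_gt0P; exists [tuple of nseq (m * k) false].
have hB i : #|B i|%:R / #|{: (m * k).-tuple bool}|%:R = 1 - p.
  have := count_block i (~: X).
  rewrite [#|~: X|]cardsCs setCK => /(congr1 (fun n => n%:R : R)).
  rewrite !natrM natrB ?max_card // => E.
  have Fn0 : #|{: {ffun 'I_k -> bool}}|%:R != 0 :> R by rewrite pnatr_eq0 -lt0n.
  have Tn0 : #|{: (m * k).-tuple bool}|%:R != 0 :> R by rewrite pnatr_eq0 -lt0n.
  have -> : #|B i|%:R = (#|{: {ffun 'I_k -> bool}}|%:R - #|X|%:R)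
      * #|{: (m * k).-tuple bool}|%:R / #|{: {ffun 'I_k -> bool}}|%:R :> R.
    by rewrite -E mulfK.
  by rewrite mulrAC mulfK // mulrBl divff.
have p1 : 0 <= 1 - p by rewrite -(hB (Ordinal m1)) divr_ge0.
have hpow : (1 - p) ^+ mu <= expR (- (c * m%:R)).
  apply: (@le_trans _ _ (expR (- p) ^+ mu)).
    apply: lerXn2r; rewrite ?nnegrE ?expR_ge0 //.
    by have := expR_ge1Dx (- p).
  rewrite -expRM_natl (_ : mu%:R * - p = - (c * m%:R)) //.
  by rewrite hmu mulrN mulrAC mulfVK // gt_eqF.
set N := #|{: (m * k).-tuple bool}|%:R : R.
have Nn0 : N != 0 by rewrite pnatr_eq0 -lt0n.
rewrite /unif_prob.
have hP : #|{: population mu m k}| = (#|{: (m * k).-tuple bool}| ^ mu)%N.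
  by rewrite /population card_ffun card_ord.
rewrite cardsCs natrB ?max_card // mulrBl hP divff; last by rewrite pnatr_eq0 -lt0n expn_gt0 Tpos.
rewrite lerD2l lerN2.
apply: (@le_trans _ _ ((\sum_i #|G i|)%:R / N ^+ mu)).
  by rewrite natrX ler_pM2r ?ler_nat // invr_gt0 exprn_gt0 // ltr0n.
rewrite natr_sum mulr_suml.
rewrite (eq_bigr (fun _ => (1 - p) ^+ mu)); last first.
  by move=> i _; rewrite hG natrX -expr_div_n hB.
rewrite sumr_const card_ord -[X in X <= _]mulr_natl ler_pM2l ?ltr0n //.
Qed.
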